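(* Let $F$ be an ordered $(m,n)$-forest with priority traversal $\tau$. Then $\mathrm{Rec}(F)=\mathrm{Rec}(\tau)$.
   Context: $[m]=\{1,\dots,m\}$. An ordered $(m,n)$-forest is a rooted forest with $n+1$ nodes and $m$ edges whose component trees $T_0,\dots,T_{n-m}$ are totally ordered, with unlabeled roots marked $\circ,\circ_1,\dots,\circ_{n-m}$, and non-root vertices labeled bijectively by $[m]$. Priority search: initially only the children of $\circ$ are unblocked; at each step visit the unblocked unvisited node with the smallest label and unblock its children; when a tree is exhausted, move to the next tree, visit its root and unblock its children. The priority traversal $\tau$ is the word of length $n$ recording the labels of visited nodes in order, with $-$ recorded for each root visited (the initial visit of $\circ$ is not recorded). $\mathrm{Rec}(F)$ is the set of forest records: non-root nodes whose label is the largest among the labels of the non-root nodes on the path from the root of their tree to them. For a word in $[m]\cup\{-\}$, $\mathrm{Rec}$ denotes the set of its records, i.e. the left-to-right maxima of its maximal subwords not containing $-$. *)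

(* Defs.v *)
From mathcomp Require Import all_boot all_order.
Set Implicit Arguments. Unset Strict Implicit. Unset Printing Implicit Defensive.

(* An ordered (m,n)-forest (m <= n) is encoded by its parent map.
   Nodes:  roots  inl r,  r : 'I_(n-m).+1   (r = 0 is the root "o", r = i is "o_i";
                   tree T_r is the tree of root r, trees ordered by r)
           non-root vertices  inr v,  v : 'I_m  (ordinal v carries label v+1,
                   so the order on labels is the order on ordinals).
   [par v] is the parent of the non-root vertex v. *)

Section Forest.
Variables m n : nat.

Definition node := ('I_(n - m).+1 + 'I_m)%type.

Definition par_rel (par : 'I_m -> node) : rel node :=
  fun x y => match x with inr v => par v == y | inl _ => false end.

Definition is_forest (par : 'I_m -> node) : Prop :=
  forall v : 'I_m, exists r : 'I_(n - m).+1, connect (par_rel par) (inr v) (inl r).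

(* Forest records: non-root nodes whose label is the largest among the labels
   of the non-root nodes on the path from the root of their tree to them,
   i.e. larger than or equal to every non-root ancestor. *)
Definition forest_rec (par : 'I_m -> node) : {set 'I_m} :=
  [set v | [forall u : 'I_m, connect (par_rel par) (inr v) (inr u) ==> (u <= v)]].

(* State: index t of the current tree (roots o,...,o_t have
   been visited) and the list V of visited non-root vertices. *)
Definition unblocked (par : 'I_m -> node) (t : nat) (V : seq 'I_m) (v : 'I_m) : bool :=
  match par v with
  | inl r => (r <= t)%N
  | inr u => u \in V
  end.

Definition cand (par : 'I_m -> node) (t : nat) (V : seq 'I_m) : seq 'I_m :=
  [seq v <- enum 'I_m | (v \notin V) && unblocked par t V v].

(* Letters: [Some v] is the label of v, [None] is the symbol "-". *)
Fixpoint trav (par : 'I_m -> node) (fuel t : nat) (V : seq 'I_m)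
  : seq (option 'I_m) :=
  match fuel with
  | 0 => [::]
  | f.+1 =>
    match cand par t V with
    | v :: _ => Some v :: trav par f t (v :: V)       (* visit smallest label *)
    | [::] => if (t < n - m)%N then None :: trav par f t.+1 V
              else [::]
    end
  end.

(* The priority traversal: a word of length n (initial visit of o unrecorded). *)
Definition priority_traversal (par : 'I_m -> node) : seq (option 'I_m) :=
  trav par n 0 [::].

End Forest.

(* Records of a word over [m] u {-}: left-to-right maxima of its maximal
   subwords not containing "-".  [cur] is the current maximum of the block. *)
Fixpoint word_rec_seq (m : nat) (cur : option 'I_m) (w : seq (option 'I_m)) : seq 'I_m :=
  match w with
  | [::] => [::]
  | None :: w' => word_rec_seq None w'
  | Some v :: w' =>
    match cur with
    | None => v :: word_rec_seq (Some v) w'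
    | Some c => if (c < v)%N then v :: word_rec_seq (Some v) w'
                else word_rec_seq cur w'
    end
  end.

Definition word_rec (m : nat) (w : seq (option 'I_m)) : {set 'I_m} :=
  [set v | v \in word_rec_seq (m := m) None w].

(* Main.v *)
Require Import Defs.
From mathcomp Require Import all_boot all_order.
From mathcomp Require Import zify.

Set Implicit Arguments. Unset Strict Implicit. Unset Printing Implicit Defensive.

Definition vis (m n : nat) (t : nat) (V : seq 'I_m) (y : node m n) : bool :=
  match y with inl r => (r <= t)%N | inr u => u \in V end.

Lemma unblockedE (m n : nat) (par : 'I_m -> node m n) t V v :
  unblocked par t V v = vis t V (par v).
Proof. by rewrite /unblocked; case: (par v). Qed.

Lemma path_inl (m n : nat) (par : 'I_m -> node m n) (r : 'I_(n - m).+1) p :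
  path (par_rel par) (inl r) p -> p = [::].
Proof. by case: p. Qed.

Lemma cand_anc (m n : nat) (par : 'I_m -> node m n) t V (v : 'I_m) y :
  v \notin V -> connect (par_rel par) (inr v) y -> vis t V y ->
  exists a, connect (par_rel par) (inr v) (inr a) /\ a \in cand par t V.
Proof.
move=> vV /connectP [p Hp ->] {y}.
elim: p v vV Hp => [|x p IH] v vV /=.
  by move=> _; rewrite (negbTE vV).
move=> /andP [/eqP Hpv Hp] Hl.
case: x Hpv Hp Hl => [r|u] Hpv Hp Hl.
  rewrite (path_inl Hp) /= in Hl.
  exists v; split; first exact: connect0.
  by rewrite mem_filter vV mem_enum unblockedE Hpv /= Hl.
case uV: (u \in V).
  exists v; split; first exact: connect0.
  by rewrite mem_filter vV mem_enum unblockedE Hpv /= uV.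
have [a [ca Ha]] := IH u (negbT uV) Hp Hl.
exists a; split => //.
apply: connect_trans ca; apply: connect1; by rewrite /= Hpv.
Qed.

Lemma anc_in (m n : nat) (par : 'I_m -> node m n) t V w u :
  (forall w, w \in V -> vis t V (par w)) -> w \in V ->
  connect (par_rel par) (inr w) (inr u) -> u \in V.
Proof.
move=> C wV /connectP [p Hp Hl].
elim: p w wV Hp Hl => [|x p IH] w wV /=.
  by move=> _ [->].
move=> /andP [/eqP Hpv Hp] Hl.
case: x Hpv Hp Hl => [r|w'] Hpv Hp Hl.
  by rewrite (path_inl Hp) in Hl.
apply: (IH w') => //.
by have := C w wV; rewrite Hpv.
Qed.

Lemma anc_proper (m n : nat) (par : 'I_m -> node m n) x u :
  connect (par_rel par) (inr x) (inr u) -> u != x ->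
  exists w, par x = inr w /\ connect (par_rel par) (inr w) (inr u).
Proof.
move=> /connectP [[|y p] /= Hp Hl] ux.
  by case: Hl => E; rewrite E eqxx in ux.
move: Hp => /andP [/eqP Hy Hp].
case: y Hy Hp Hl => [r|w] Hy Hp Hl.
  by rewrite (path_inl Hp) in Hl.
exists w; split => //.
by apply/connectP; exists p.
Qed.

Lemma size_lt (m : nat) (V : seq 'I_m) x : uniq V -> x \notin V -> (size V < m)%N.
Proof.
move=> U xV.
have : uniq (x :: V) by rewrite /= xV.
move/card_uniqP => E.
by have := max_card (mem (x :: V)); rewrite E card_ord.
Qed.

Lemma cand_min (m n : nat) (par : 'I_m -> node m n) t V x r a :
  cand par t V = x :: r -> a \in cand par t V -> (x <= a)%N.
Proof.
move=> Hc.
have tr : transitive (fun a b : 'I_m => (a <= b)%N).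
  by move=> b a' c; apply: leq_trans.
have S : sorted (fun a b : 'I_m => (a <= b)%N) (enum 'I_m).
  by have := iota_sorted 0 m; rewrite -val_enum_ord sorted_map.
have : sorted (fun a b : 'I_m => (a <= b)%N) (cand par t V).
  by rewrite /cand; apply: (sorted_filter tr).
rewrite Hc /= => Hp.
have /allP Ha := order_path_min tr Hp.
rewrite in_cons => /orP [/eqP -> //|ar].
exact: Ha.
Qed.

Definition recb (m n : nat) (par : 'I_m -> node m n) (z : 'I_m) : bool :=
  [forall u : 'I_m, connect (par_rel par) (inr z) (inr u) ==> (u <= z)%N].

Lemma main (m n : nat) (par : 'I_m -> node m n) : is_forest par ->
  forall f t V (cur : option 'I_m),
  uniq V -> (forall w, w \in V -> vis t V (par w)) ->
  (forall w v, w \in V -> v \notin V -> connect (par_rel par) (inr v) (inr w) ->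
     exists c, cur = Some c /\ (w <= c)%N) ->
  (forall c, cur = Some c -> c \in V /\
     forall v y, v \notin V -> vis t V y -> connect (par_rel par) (inr v) y ->
       (v < c)%N -> exists a, connect (par_rel par) (inr v) (inr a) /\ (c <= a)%N) ->
  ((m - size V) + (n - m - t) <= f)%N -> (t <= n - m)%N ->
  forall z, (z \in word_rec_seq cur (trav par f t V)) = (z \notin V) && recb par z.
Proof.
move=> Hfor.
elim=> [|f IH] t V cur U C J K F T z.
  rewrite /=; case zV: (z \in V) => //=.
  exfalso; have := size_lt U (negbT zV); move: F; set s := size V; set k := n - m - t; move=> F H; lia.
rewrite /=.
case Hc: (cand par t V) => [|x r].
  case: ifP => Ht.
    rewrite /= IH //.
    - by move=> w /C; case: (par w) => //= r Hr; lia.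
    - move=> w v wV vV cvw.
      have [a [_ Ha]] := cand_anc vV cvw (wV : vis t V (inr w)).
      by rewrite Hc in Ha.
    - by move: F; set s := size V; lia.
  case zV: (z \in V) => //=.
  have [r Hr] := Hfor z.
  have vr : vis t V (inl r) by rewrite /=; have := ltn_ord r; lia.
  have [a [_ Ha]] := cand_anc (negbT zV) Hr vr.
  by rewrite Hc in Ha.
have : x \in cand par t V by rewrite Hc mem_head.
rewrite mem_filter mem_enum andbT => /andP [xV xub].
rewrite unblockedE in xub.
have xpar : connect (par_rel par) (inr x) (par x) by apply: connect1; rewrite /= eqxx.
have neqx : forall c, c \in V -> (x != c :> nat).
  move=> c cV; apply/eqP => E.
  have E' : x = c by apply: val_inj.
  by rewrite E' cV in xV.
have Hb : (if cur is Some c then (c < x)%N else true) = recb par x.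
  apply/idP/idP.
  - move=> Hcur; apply/forallP => u; apply/implyP => cxu.
    case: (eqVneq u x) => [->//|ux].
    have [w [Hw cwu]] := anc_proper cxu ux.
    have wV : w \in V by move: xub; rewrite Hw.
    have uV := anc_in C wV cwu.
    have [c [Ec uc]] := J u x uV xV cxu.
    by move: Hcur; rewrite Ec => cx; apply: leq_trans uc (ltnW cx).
  - move=> /forallP Hr; case: cur J K => [c|] // J K.
    have [cV Kc] := K c erefl.
    case: (ltnP c x) => // xc.
    have xc' : (x < c)%N by rewrite ltn_neqAle xc neqx.
    have [a [cxa ca]] := Kc x (par x) xV xub xpar xc'.
    have := implyP (Hr a) cxa.
    by move: ca xc'; lia.
have step : forall c', ((c' = x) /\ (forall c, cur = Some c -> (c < x)%N)) \/
                       (cur = Some c' /\ (x < c')%N) ->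
   forall z, (z \in word_rec_seq (Some c') (trav par f t (x :: V))) =
             (z \notin x :: V) && recb par z.
  move=> c' Hc' z'; apply: IH.
  - by rewrite /= xV U.
  - move=> w; rewrite in_cons => /orP [/eqP ->|wV].
      by move: xub; case: (par x) => //= u uV; rewrite in_cons uV orbT.
    by move: (C w wV); case: (par w) => //= u uV; rewrite in_cons uV orbT.
  - move=> w v; rewrite in_cons => /orP [/eqP ->|wV] vV cvw; exists c'; split => //.
      by case: Hc' => [[-> _]|[_ /ltnW]].
    have vV' : v \notin V by move: vV; rewrite in_cons negb_or => /andP [].
    have [c [Ec wc]] := J w v wV vV' cvw.
    case: Hc' => [[-> Hl]|[E _]].
      by apply: leq_trans wc (ltnW (Hl c Ec)).
    by move: Ec; rewrite E => -[->].
  - move=> c0 [<-]; split.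
      case: Hc' => [[-> _]|[E _]]; first by rewrite mem_head.
      by rewrite in_cons (proj1 (K c' E)) orbT.
    move=> v y vV vy cvy vc.
    have vV' : v \notin V by move: vV; rewrite in_cons negb_or => /andP [].
    have [y0 [vy0 cvy0]] : exists y0, vis t V y0 /\ connect (par_rel par) (inr v) y0.
      case: y vy cvy => [r0|u] /= vy cvy.
        by exists (inl r0).
      move: vy; rewrite in_cons => /orP [/eqP Eu|uV].
        subst u; exists (par x); split => //; exact: connect_trans cvy xpar.
      by exists (inr u).
    case: Hc' => [[Ec _]|[E _]].
      subst c'.
      have [a [cva Ha]] := cand_anc vV' cvy0 vy0.
      by exists a; split => //; apply: cand_min Hc Ha.
    exact: (proj2 (K c' E)) v y0 vV' vy0 cvy0 vc.
  - by move: F; rewrite /=; have := size_lt U xV; set s := size V; lia.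
  - exact: T.
have fin : forall L, (forall z, (z \in L) = (z \notin x :: V) && recb par z) ->
   (z \in (if recb par x then x :: L else L)) = (z \notin V) && recb par z.
  move=> L HL; case: (eqVneq z x) => [->|zx].
    case Hr: (recb par x); first by rewrite mem_head xV.
    by rewrite HL mem_head Hr !andbF.
  have E : (z \in (if recb par x then x :: L else L)) = (z \in L).
    by case: ifP; rewrite // in_cons (negbTE zx).
  by rewrite E HL in_cons (negbTE zx).
case: cur J K Hb step => [c|] J K Hb step /=.
  case: ifP => cx.
    have H1 : forall c0, Some c = Some c0 -> (c0 < x)%N by move=> c0 [<-].
    have := fin _ (step x (or_introl (conj erefl H1))).
    by rewrite -Hb cx; apply.
  have xc : (x < c)%N.
    by rewrite ltn_neqAle neqx ?(proj1 (K c erefl)) //=; move: cx; lia.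
  have := fin _ (step c (or_intror (conj erefl xc))).
  by rewrite -Hb cx; apply.
have H1 : forall c0, (None : option 'I_m) = Some c0 -> (c0 < x)%N by [].
have := fin _ (step x (or_introl (conj erefl H1))).
by rewrite -Hb; apply.
Qed.

Theorem lemma4p5 (m n : nat) (par : 'I_m -> node m n) :
  (m <= n)%N -> is_forest par ->
  forest_rec par = word_rec (priority_traversal par).
Proof.
move=> mn Hfor; apply/setP => z.
rewrite /word_rec /priority_traversal !inE (main Hfor) //.
by move: mn; rewrite /=; lia.
Qed.
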